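(* Let $G$ be a finite $p$-group for some prime $p$. Then the poset $C(G)$ of cyclic subgroups of $G$ possesses a breaking point if and only if $G$ is either a cyclic $p$-group of order at least $p^2$, or a generalized quaternion $2$-group $Q_{2^n}$ for some $n\geq 3$.
   Context: For a finite group $G$, $C(G)$ denotes the set of cyclic subgroups of $G$, partially ordered by inclusion. A breaking point of $C(G)$ is a subgroup $H\in C(G)$ with $H\neq 1$ and $H\neq G$ such that for every $X\in C(G)$ we have $X\leq H$ or $H\leq X$. For $n\geq 3$, the generalized quaternion $2$-group is $Q_{2^n}=\langle a,b \mid a^{2^{n-2}}=b^2,\ a^{2^{n-1}}=1,\ b^{-1}ab=a^{-1}\rangle$, of order $2^n$. *)

(* Defs.v *)
From HB Require Import structures.
From mathcomp Require Import all_boot all_fingroup all_solvable.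
Set Implicit Arguments. Unset Strict Implicit. Unset Printing Implicit Defensive.
Local Open Scope group_scope.

Definition breaking_point (gT : finGroupType) (G H : {group gT}) : Prop :=
  [/\ H \subset G, cyclic H, H :!=: 1, H :!=: G &
      forall X : {group gT}, X \subset G -> cyclic X ->
        X \subset H \/ H \subset X].

Definition has_breaking_point (gT : finGroupType) (G : {group gT}) : Prop :=
  exists H : {group gT}, breaking_point G H.

(* Main.v *)
Require Import Defs.
From HB Require Import structures.
From mathcomp Require Import all_boot all_fingroup all_solvable.
Local Open Scope group_scope.

Lemma ohm_bp (gT : finGroupType) (G : {group gT}) (p : nat) :
  prime p -> p.-group G -> #|'Ohm_1(G)| = p -> #|G| != p ->
  breaking_point G 'Ohm_1(G).
Proof.
move=> p_pr pG oO nGp; split.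
- exact: Ohm_sub.
- by apply: prime_cyclic; rewrite oO.
- by rewrite -cardG_gt1 oO prime_gt1.
- by apply/eqP=> E; move: nGp; rewrite -E oO eqxx.
move=> X sXG _.
have [->|ntX] := eqVneq X 1%G; first by left; exact: sub1G.
right.
have sOXG : 'Ohm_1(X) \subset 'Ohm_1(G) by exact: OhmS.
have ntOX : 'Ohm_1(X) != 1 by rewrite Ohm1_eq1.
have dv : #|'Ohm_1(X)| %| p by rewrite -oO cardSg.
have oOX : #|'Ohm_1(X)| = p.
  case/primeP: (p_pr) => _ /(_ _ dv) /orP[/eqP o1|/eqP //].
  by move: ntOX; rewrite -cardG_gt1 o1.
have E : 'Ohm_1(X) == 'Ohm_1(G) :> {set gT} by rewrite eqEcard sOXG oO oOX leqnn.
apply: (subset_trans _ (Ohm_sub 1 X)); by rewrite (eqP E).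
Qed.

Lemma bp_ohm (gT : finGroupType) (G H : {group gT}) (p : nat) :
  prime p -> p.-group G -> breaking_point G H -> #|'Ohm_1(G)| = p.
Proof.
move=> p_pr pG [sHG cycH ntH nHG bp].
have pH : p.-group H := pgroupS sHG pG.
have oOH : #|'Ohm_1(H)| = p by apply: Ohm1_cyclic_pgroup_prime.
have sOG : 'Ohm_1(G) \subset H.
  rewrite (OhmE 1 pG) gen_subG; apply/subsetP=> x.
  rewrite expn1 => /LdivP[Gx xp].
  have ox : #[x] %| p by rewrite order_dvdn xp.
  case: (bp <[x]>%G); [by rewrite cycle_subG | exact: cycle_cyclic | by rewrite cycle_subG | move=> sHx].
  have dH : #|H| %| p := dvdn_trans (cardSg sHx) ox.
  have oH : #|H| = p.
    case/primeP: (p_pr) => _ /(_ _ dH) /orP[/eqP o1|/eqP //].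
    by move: ntH; rewrite -cardG_gt1 o1.
  have ox' : #[x] = p.
    case/primeP: (p_pr) => _ /(_ _ ox) /orP[/eqP o1|/eqP //].
    by move: (cardSg sHx); rewrite -orderE o1 oH dvdn1 => /eqP p1; move: (prime_gt1 p_pr); rewrite p1.
  have E : H == <[x]> :> {set gT} by rewrite eqEcard sHx -orderE ox' oH leqnn.
  by rewrite (eqP E) cycle_id.
have s1 : 'Ohm_1(G) \subset 'Ohm_1(H).
  by rewrite -{1}(Ohm_id 1 G); apply: OhmS.
have s2 : 'Ohm_1(H) \subset 'Ohm_1(G) by apply: OhmS.
have E : 'Ohm_1(H) == 'Ohm_1(G) :> {set gT} by rewrite eqEsubset s1 s2.
by rewrite -(eqP E).
Qed.

Theorem lemma2p1 (gT : finGroupType) (G : {group gT}) (p : nat)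
  (p_pr : prime p) (pG : p.-group G) :
  has_breaking_point G <->
  ((cyclic G /\ (p ^ 2 <= #|G|)%N) \/
   (exists n : nat, (3 <= n)%N /\ G \isog 'Q_(2 ^ n))).
Proof.
split.
  case=> H bpH; have oO := @bp_ohm gT G H p p_pr pG bpH.
  case: bpH => sHG cycH ntH nHG _.
  have ntG : G :!=: 1.
    apply: contraNneq ntH => G1; by rewrite -subG1 -G1.
  case/orP: (introT (prime_Ohm1P pG ntG) oO) => [cycG|/andP[_ /eqP/quaternion_classP [n n2 iso]]]; last first.
    by right; exists n.
  left; split => //.
  have [k ok] := p_natP pG.
  have [j oj] := p_natP (pgroupS sHG pG).
  have ltHG : #|H| < #|G|.
    by apply: proper_card; rewrite properEneq nHG sHG.
  have gtH : 1 < #|H| by rewrite cardG_gt1.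
  have p1 := prime_gt1 p_pr.
  rewrite ok oj ltn_exp2l // in ltHG.
  rewrite oj -{1}(expn0 p) ltn_exp2l // in gtH.
  by rewrite ok leq_exp2l //; apply: leq_ltn_trans ltHG.
move=> hyp.
have p1 := prime_gt1 p_pr.
have ntG : G :!=: 1.
  rewrite -cardG_gt1; case: hyp => [[_ h]|[n [n3 iso]]].
    by apply: leq_trans h; rewrite -{1}(expn0 p) ltn_exp2l.
  by rewrite (card_isog iso) card_quaternion // -{1}(expn0 2) ltn_exp2l // (leq_trans _ n3).
exists 'Ohm_1(G)%G; apply: (@ohm_bp gT G p p_pr pG).
  apply/(prime_Ohm1P pG ntG); case: hyp => [[-> _] //|[n [n3 iso]]].
  apply/orP; right; apply/andP; split; last first.
    by apply/eqP/quaternion_classP; exists n.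
  have [_ dv _] := pgroup_pdiv pG ntG.
  move: dv; rewrite (card_isog iso) card_quaternion // Euclid_dvdX // => /andP[d2 _].
  by rewrite eqn_leq (dvdn_leq _ d2) // p1.
case: hyp => [[_ h]|[n [n3 iso]]].
  apply/eqP=> E; move: h; rewrite E -{2}(expn1 p) leq_exp2l //.
have [_ dv _] := pgroup_pdiv pG ntG.
move: dv; rewrite (card_isog iso) card_quaternion // Euclid_dvdX // => /andP[d2 _].
have p2 : p = 2 by apply/eqP; rewrite eqn_leq (dvdn_leq _ d2) // p1.
rewrite p2 -{2}(expn1 2) eqn_exp2l //; apply/eqP => n1; move: n3; rewrite n1.
by [].
Qed.
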